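(* Let $\lambda_{\max}>1$ and let $F:[0,\lambda_{\max}]\to\mathbb{R}$ be continuously differentiable, with $F''$ existing and continuous on $(0,\lambda_{\max})$, $F''(1)<0$, and $F^{(3)},F^{(4)}$ existing and bounded on $[0,\lambda_{\max}]$. Suppose $F(x)<F'(1)(x-1)+F(1)$ for all $x\in[0,\lambda_{\max}]\setminus\{1\}$. Then there exists a concave quadratic function $G$ with $G(1)=F(1)$ and $G'(1)=F'(1)$ such that $F(x)\le G(x)\le F'(1)(x-1)+F(1)$ for all $x\in[0,\lambda_{\max}]$. *)

(* Defs.v *)
From Stdlib Require Import Reals.
From Coquelicot Require Import Coquelicot.
Open Scope R_scope.

Definition is_derive_on_closed (a b : R) (f f' : R -> R) : Prop :=
  forall x, a <= x <= b ->
    filterlim (fun h => (f (x + h) - f x) / h)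
      (within (fun h => h <> 0 /\ a <= x + h <= b) (locally 0))
      (locally (f' x)).

Definition continuous_on_closed (a b : R) (g : R -> R) : Prop :=
  forall x, a <= x <= b ->
    filterlim g (within (fun y => a <= y <= b) (locally x)) (locally (g x)).

(* Main.v *)
Require Import Defs.
From Stdlib Require Import Reals Lra.
From Coquelicot Require Import Coquelicot.
Open Scope R_scope.

Lemma ball_R (x e y : R) : ball x e y <-> Rabs (y - x) < e.
Proof. unfold ball; simpl; unfold AbsRing_ball, abs, minus, plus, opp; simpl. tauto. Qed.

Lemma deriv_ed a b f f' x : is_derive_on_closed a b f f' -> a <= x <= b ->
  forall e, 0 < e -> exists d, 0 < d /\ forall h, h <> 0 -> a <= x + h <= b -> Rabs h < d ->
   Rabs ((f (x+h) - f x)/h - f' x) < e.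
Proof.
  intros H Hx e He. specialize (H x Hx).
  apply (proj1 (filterlim_locally _ _)) with (eps := mkposreal e He) in H.
  destruct H as [d Hd]. exists d. split; [apply cond_pos|].
  intros h H1 H2 H3. apply ball_R. apply Hd; [apply ball_R; rewrite Rminus_0_r; auto | auto].
Qed.

Lemma cont_ed a b f f' x : is_derive_on_closed a b f f' -> a <= x <= b ->
  forall e, 0 < e -> exists d, 0 < d /\ forall y, a <= y <= b -> Rabs (y - x) < d ->
   Rabs (f y - f x) < e.
Proof.
  intros H Hx e He. destruct (deriv_ed a b f f' x H Hx 1 Rlt_0_1) as [d [Hd Hh]].
  set (K := Rabs (f' x) + 1).
  assert (HK : 0 < K) by (unfold K; pose proof (Rabs_pos (f' x)); lra).
  exists (Rmin d (e / K)). split. { apply Rmin_pos; auto. apply Rdiv_lt_0_compat; auto. }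
  intros y Hy Hyx. destruct (Req_dec y x) as [->|Hne].
  { rewrite Rminus_eq_0, Rabs_R0; auto. }
  specialize (Hh (y - x)). replace (x + (y - x)) with y in Hh by ring.
  assert (Hyx0 : y - x <> 0) by lra.
  assert (Hd1 : Rabs (y-x) < d) by (apply Rlt_le_trans with (1 := Hyx); apply Rmin_l).
  assert (Hd2 : Rabs (y-x) < e / K) by (apply Rlt_le_trans with (1 := Hyx); apply Rmin_r).
  specialize (Hh Hyx0 Hy Hd1).
  assert (Hq : Rabs ((f y - f x) / (y - x)) <= K).
  { unfold K. pose proof (Rabs_triang ((f y - f x) / (y - x) - f' x) (f' x)).
    replace ((f y - f x) / (y - x) - f' x + f' x) with ((f y - f x) / (y - x)) in H0 by ring. lra. }
  replace (f y - f x) with ((f y - f x) / (y - x) * (y - x)) by (field; auto).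
  rewrite Rabs_mult.
  assert (Rabs (y-x) * K < e).
  { apply Rmult_lt_compat_r with (r := K) in Hd2; auto. unfold Rdiv in Hd2.
    rewrite Rmult_assoc, Rinv_l in Hd2 by lra. lra. }
  pose proof (Rabs_pos (y-x)). pose proof (Rabs_pos ((f y - f x) / (y - x))). nra.
Qed.

Lemma interior_deriv a b f f' x : is_derive_on_closed a b f f' -> a < x < b -> is_derive f x (f' x).
Proof.
  intros H Hx. apply is_derive_Reals. intros e He.
  destruct (deriv_ed a b f f' x H ltac:(lra) e He) as [d [Hd Hh]].
  assert (Hp : 0 < Rmin d (Rmin (x - a) (b - x))).
  { apply Rmin_pos; auto. apply Rmin_pos; lra. }
  exists (mkposreal _ Hp). intros h Hh0 Hhd. simpl in Hhd.
  pose proof (Rmin_l d (Rmin (x - a) (b - x))). pose proof (Rmin_r d (Rmin (x - a) (b - x))).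
  pose proof (Rmin_l (x - a) (b - x)). pose proof (Rmin_r (x - a) (b - x)).
  apply Hh; auto. apply Rabs_def2 in Hhd. lra. lra.
Qed.
Definition clamp a b y := Rmax a (Rmin b y).

Lemma clamp_id a b x : a <= x <= b -> clamp a b x = x.
Proof. intros. unfold clamp, Rmax, Rmin. repeat destruct Rle_dec; lra. Qed.

Lemma clamp_in a b y : a <= b -> a <= clamp a b y <= b.
Proof. intros. unfold clamp, Rmax, Rmin. repeat destruct Rle_dec; lra. Qed.

Lemma clamp_lip a b x y : a <= b -> Rabs (clamp a b y - clamp a b x) <= Rabs (y - x).
Proof. intros. unfold clamp, Rmax, Rmin, Rabs. repeat destruct Rle_dec; repeat destruct Rcase_abs; lra. Qed.

Lemma cont_clamp a b f f' x : a <= b -> is_derive_on_closed a b f f' -> a <= x <= b ->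
  continuity_pt (fun y => f (clamp a b y)) x.
Proof.
  intros Hab H Hx. unfold continuity_pt, continue_in, limit1_in, limit_in; simpl; unfold R_dist.
  intros e He. destruct (cont_ed a b f f' x H Hx e He) as [d [Hd Hh]].
  exists d. split; auto. intros y [_ Hy].
  rewrite (clamp_id a b x Hx). apply Hh. apply clamp_in; auto.
  pose proof (clamp_lip a b x y Hab). rewrite (clamp_id a b x Hx) in H0. lra.
Qed.

Lemma between_abs x xi : Rmin 1 x <= xi <= Rmax 1 x -> Rabs (xi - 1) <= Rabs (x - 1).
Proof. intros. unfold Rmin, Rmax, Rabs in *. repeat destruct Rle_dec; repeat destruct Rcase_abs; lra. Qed.

Lemma between_sign x xi : Rmin 1 x <= xi <= Rmax 1 x -> (x - 1) * (xi - 1) >= 0.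
Proof. intros. unfold Rmin, Rmax in *. repeat destruct Rle_dec; nra. Qed.

Theorem lemmaC2 (lmax : R) (F F1 F2 F3 F4 : R -> R) (M : R) :
  1 < lmax ->
  is_derive_on_closed 0 lmax F F1 ->
  continuous_on_closed 0 lmax F1 ->
  (forall x, 0 < x < lmax -> is_derive F1 x (F2 x)) ->
  (forall x, 0 < x < lmax -> continuous F2 x) ->
  F2 1 < 0 ->
  (forall x, 0 < x < lmax -> is_derive F2 x (F3 x)) ->
  (forall x, 0 < x < lmax -> is_derive F3 x (F4 x)) ->
  (forall x, 0 < x < lmax -> Rabs (F3 x) <= M /\ Rabs (F4 x) <= M) ->
  (forall x, 0 <= x <= lmax -> x <> 1 -> F x < F1 1 * (x - 1) + F 1) ->
  exists a b c : R,
    a < 0 /\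
    a * 1 ^ 2 + b * 1 + c = F 1 /\
    2 * a * 1 + b = F1 1 /\
    (forall x, 0 <= x <= lmax ->
       F x <= a * x ^ 2 + b * x + c /\
       a * x ^ 2 + b * x + c <= F1 1 * (x - 1) + F 1).
Proof.
  intros Hl HF HF1c HF2 HF2c HF21 _ _ _ Htan.
  set (c := - F2 1 / 4).
  assert (Hc : 0 < c) by (unfold c; lra).
  assert (H2c := HF2c 1 ltac:(lra)).
  assert (Heps : 0 < - F2 1 / 2) by lra.
  apply (proj1 (filterlim_locally _ _)) with (eps := mkposreal _ Heps) in H2c.
  destruct H2c as [d0 Hd0].
  set (r := Rmin d0 (Rmin 1 (lmax - 1))).
  assert (Hr : 0 < r) by (apply Rmin_pos; [apply cond_pos | apply Rmin_pos; lra]).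
  assert (Hin : forall x, Rabs (x - 1) < r -> 0 < x < lmax /\ F2 x < F2 1 / 2).
  { intros x Hx. pose proof (Rmin_l d0 (Rmin 1 (lmax - 1))). pose proof (Rmin_r d0 (Rmin 1 (lmax - 1))).
    pose proof (Rmin_l 1 (lmax - 1)). pose proof (Rmin_r 1 (lmax - 1)). fold r in H, H0.
    pose proof (Rabs_def2 _ _ Hx). split; [lra|].
    assert (Hb : ball 1 d0 x) by (apply ball_R; lra).
    specialize (Hd0 x Hb). assert (Hd1 : Rabs (F2 x - F2 1) < - F2 1 / 2) by (apply ball_R; exact Hd0). apply Rabs_def2 in Hd1. lra. }
  set (K := fun x => F1 1 * (x - 1) + F 1 - F x - c * (x - 1) ^ 2).
  set (K1 := fun x => F1 1 - F1 x - 2 * c * (x - 1)).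
  set (K2 := fun x => - F2 x - 2 * c).
  assert (dK : forall x, Rabs (x - 1) < r -> is_derive K x (K1 x)).
  { intros x Hx. destruct (Hin x Hx) as [Hx0 _].
    pose proof (interior_deriv 0 lmax F F1 x HF Hx0) as HdF.
    unfold K, K1. auto_derive.
    - exists (F1 x); exact HdF.
    - assert (E : Derive (fun y : R => F y) x = F1 x) by (apply is_derive_unique; exact HdF). rewrite E. ring. }
  assert (dK1 : forall x, Rabs (x - 1) < r -> is_derive K1 x (K2 x)).
  { intros x Hx. destruct (Hin x Hx) as [Hx0 _].
    pose proof (HF2 x Hx0) as HdF.
    unfold K1, K2. auto_derive.
    - exists (F2 x); exact HdF.
    - assert (E : Derive (fun y : R => F1 y) x = F2 x) by (apply is_derive_unique; exact HdF). rewrite E. ring. }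
  assert (Claim1 : forall x, Rabs (x - 1) < r -> K1 x * (x - 1) >= 0).
  { intros x Hx.
    destruct (MVT_gen K1 1 x K2) as [xi [Hxi Heq]].
    - intros y Hy. apply dK1. pose proof (between_abs x y ltac:(lra)). lra.
    - intros y Hy. apply continuity_pt_filterlim. apply (@ex_derive_continuous R_AbsRing R_NormedModule).
      exists (K2 y). apply dK1. pose proof (between_abs x y Hy). lra.
    - assert (K1 1 = 0) by (unfold K1; ring).
      assert (HK2 : K2 xi > 0).
      { unfold K2. pose proof (between_abs x xi Hxi). destruct (Hin xi ltac:(lra)). unfold c. lra. }
      rewrite H in Heq. replace (K1 x) with (K2 xi * (x - 1)) by lra.
      apply Rle_ge. replace (K2 xi * (x - 1) * (x - 1)) with (K2 xi * ((x - 1) ^ 2)) by ring. apply Rmult_le_pos; [lra | apply pow2_ge_0]. }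
  assert (Claim2 : forall x, Rabs (x - 1) < r -> K x >= 0).
  { intros x Hx.
    destruct (MVT_gen K 1 x K1) as [xi [Hxi Heq]].
    - intros y Hy. apply dK. pose proof (between_abs x y ltac:(lra)). lra.
    - intros y Hy. apply continuity_pt_filterlim. apply (@ex_derive_continuous R_AbsRing R_NormedModule).
      exists (K1 y). apply dK. pose proof (between_abs x y Hy). lra.
    - assert (K 1 = 0) by (unfold K; ring).
      rewrite H in Heq.
      pose proof (between_abs x xi Hxi). pose proof (between_sign x xi Hxi).
      pose proof (Claim1 xi ltac:(lra)).
      destruct (Req_dec xi 1) as [->|Hne].
      + assert (K1 1 = 0) by (unfold K1; ring). nra.
      + assert (0 < (xi - 1) ^ 2) by (destruct (Rlt_or_le (xi - 1) 0); [nra | assert (0 < xi - 1) by lra; nra]).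
        assert (K1 xi * (x - 1) * (xi - 1) ^ 2 >= 0).
        { replace (K1 xi * (x - 1) * (xi - 1) ^ 2) with ((K1 xi * (xi - 1)) * ((x - 1) * (xi - 1))) by ring.
          nra. }
        nra. }
  set (dl := r / 2).
  set (g := fun x => F1 1 * (x - 1) + F 1 - F (clamp 0 lmax x)).
  assert (Hg : forall x, 0 <= x <= lmax -> continuity_pt g x).
  { intros x Hx. unfold g.
    change (continuity_pt (minus_fct (fun y => F1 1 * (y - 1) + F 1) (fun y => F (clamp 0 lmax y))) x).
    apply continuity_pt_minus; [ | apply (cont_clamp 0 lmax F F1); auto; lra].
    generalize (F1 1) (F 1); intros p q. reg. }
  assert (Hrl : r <= 1 /\ r <= lmax - 1).
  { pose proof (Rmin_r d0 (Rmin 1 (lmax - 1))).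
    pose proof (Rmin_l 1 (lmax - 1)). pose proof (Rmin_r 1 (lmax - 1)). fold r in H. lra. }
  destruct (continuity_ab_min g 0 (1 - dl)) as [m1 [Hm1 Hm1i]].
  { unfold dl; lra. } { intros y Hy. apply Hg. unfold dl in *; lra. }
  destruct (continuity_ab_min g (1 + dl) lmax) as [m2 [Hm2 Hm2i]].
  { unfold dl; lra. } { intros y Hy. apply Hg. unfold dl in *; lra. }
  assert (Hgpos : forall x, 0 <= x <= lmax -> x <> 1 -> g x > 0).
  { intros x Hx Hx1. unfold g. rewrite clamp_id by lra. specialize (Htan x Hx Hx1). lra. }
  assert (Hg1 : g m1 > 0) by (apply Hgpos; unfold dl in *; lra).
  assert (Hg2 : g m2 > 0) by (apply Hgpos; unfold dl in *; lra).
  set (m := Rmin (g m1) (g m2)).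
  assert (Hm : 0 < m) by (apply Rmin_pos; lra).
  set (eps := Rmin c (m / lmax ^ 2)).
  assert (Hl2 : 0 < lmax ^ 2) by (apply pow_lt; lra).
  assert (Heps0 : 0 < eps) by (apply Rmin_pos; auto; apply Rdiv_lt_0_compat; auto).
  assert (Hmain : forall x, 0 <= x <= lmax -> eps * (x - 1) ^ 2 <= F1 1 * (x - 1) + F 1 - F x).
  { intros x Hx.
    destruct (Rlt_or_le (Rabs (x - 1)) r) as [Hxr | Hxr].
    - assert (Hk : F1 1 * (x-1) + F 1 - F x - c*(x-1)^2 >= 0) by exact (Claim2 x Hxr).
      pose proof (Rmin_l c (m / lmax ^ 2)). fold eps in H.
      assert (0 <= (x - 1) ^ 2) by apply pow2_ge_0. assert (eps * (x-1)^2 <= c * (x-1)^2) by (apply Rmult_le_compat_r; auto). lra.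
    - assert (Hgx : m <= g x).
      { unfold Rabs in Hxr. destruct Rcase_abs.
        + pose proof (Hm1 x ltac:(unfold dl; lra)). pose proof (Rmin_l (g m1) (g m2)). fold m in H0. lra.
        + pose proof (Hm2 x ltac:(unfold dl; lra)). pose proof (Rmin_r (g m1) (g m2)). fold m in H0. lra. }
      unfold g in Hgx; cbv beta in Hgx. rewrite clamp_id in Hgx by lra.
      pose proof (Rmin_r c (m / lmax ^ 2)). fold eps in H.
      assert (Hx2 : (x - 1) ^ 2 <= lmax ^ 2) by nra.
      assert (eps * (x - 1) ^ 2 <= m / lmax ^ 2 * lmax ^ 2).
      { apply Rmult_le_compat; [lra | apply pow2_ge_0 | lra | lra]. }
      replace (m / lmax ^ 2 * lmax ^ 2) with m in H0 by (field; lra). lra. }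
  exists (- eps), (F1 1 + 2 * eps), (F1 1 * -1 + F 1 - eps).
  split; [lra|]. split; [ring|]. split; [ring|].
  intros x Hx. specialize (Hmain x Hx).
  replace (- eps * x ^ 2 + (F1 1 + 2 * eps) * x + (F1 1 * -1 + F 1 - eps))
    with (F1 1 * (x - 1) + F 1 - eps * (x - 1) ^ 2) by ring.
  assert (0 <= eps * (x - 1) ^ 2) by (apply Rmult_le_pos; [lra | apply pow2_ge_0]).
  split; lra.
Qed.
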